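(* Assume the structure is rigid. Fix $\zeta=(\xi,\eta)\in\Omega$ and let $Z(z,\zeta):=(y-\eta)-i(z)(x-\xi)$. Then $Z(\cdot,\zeta)$ is invertible in each fiber $A_z$, $z\neq\zeta$, the section $z\mapsto Z(z,\zeta)^{-1}$ is $C^1$ on $\Omega\setminus\{\zeta\}$, and \[ \partial_{\bar z}\bigl(Z(\cdot,\zeta)^{-1}\bigr)=0\quad\text{on }\Omega\setminus\{\zeta\}. \]
   Context: Let $\Omega\subset\mathbb R^2$ be open with coordinates $(x,y)$, and let $\alpha,\beta\in C^1(\Omega,\mathbb R)$ satisfy $\Delta:=4\alpha-\beta^2>0$ on $\Omega$. For $z\in\Omega$ let $A_z:=\mathbb R[X]/(X^2+\beta(z)X+\alpha(z))$ (a commutative real algebra) and let $i=i(z)$ denote the class of $X$, so $i^2+\beta i+\alpha=0$ and $\{1,i(z)\}$ is a real basis of $A_z$. An ($A$-valued) section is $f=u+v\,i$ with $u,v:\Omega\to\mathbb R$; it is $C^k$ if $u,v$ are, and sums/products of sections are taken fiberwise. In each fiber $2i+\beta$ is invertible with $(2i+\beta)^{-1}=(-\beta-2i)/\Delta$. The derivatives of the generator are the sections $i_x:=-(\alpha_x+\beta_x i)(2i+\beta)^{-1}$ and $i_y:=-(\alpha_y+\beta_y i)(2i+\beta)^{-1}$. For a $C^1$ section $f=u+vi$ set $\partial_x f:=u_x+v_x i+v\,i_x$, $\partial_y f:=u_y+v_y i+v\,i_y$, $\partial_{\bar z}f:=\tfrac12(\partial_x f+i\,\partial_y f)$. The structure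 is called rigid if $i_x+i\,i_y=0$ on $\Omega$. *)

(* Defs.v *)
From Stdlib Require Import Reals Lra.
From Coquelicot Require Import Coquelicot.
Open Scope R_scope.

Definition open2 (S : R -> R -> Prop) : Prop :=
  forall x y, S x y -> exists eps, 0 < eps /\
    forall x' y', Rabs (x' - x) < eps -> Rabs (y' - y) < eps -> S x' y'.

Definition dx (f : R -> R -> R) (x y : R) : R := Derive (fun t => f t y) x.
Definition dy (f : R -> R -> R) (x y : R) : R := Derive (fun t => f x t) y.

Definition C1_on (S : R -> R -> Prop) (f : R -> R -> R) : Prop :=
  forall x y, S x y ->
    continuity_2d_pt f x y /\
    ex_derive (fun t => f t y) x /\ ex_derive (fun t => f x t) y /\
    continuity_2d_pt (dx f) x y /\ continuity_2d_pt (dy f) x y.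

(* An element u + v i of the fiber A_z = R[X]/(X^2 + b X + a) is the pair (u,v). *)
Definition Afib := (R * R)%type.
Definition oneA : Afib := (1, 0).
Definition Ai : Afib := (0, 1).
Definition addA (p q : Afib) : Afib := (fst p + fst q, snd p + snd q).
Definition sclA (c : R) (p : Afib) : Afib := (c * fst p, c * snd p).
(* multiplication in the fiber with parameters a = alpha(z), b = beta(z):
   i^2 = - b i - a *)
Definition mulA (a b : R) (p q : Afib) : Afib :=
  (fst p * fst q - a * (snd p * snd q),
   fst p * snd q + snd p * fst q - b * (snd p * snd q)).

(* (2i + beta)^{-1} = (-beta - 2i)/Delta *)
Definition inv2ib (a b : R) : Afib := sclA (/ (4 * a - b ^ 2)) (- b, -2).

Definition i_x (al be : R -> R -> R) (x y : R) : Afib :=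
  let a := al x y in let b := be x y in
  sclA (-1) (mulA a b (dx al x y, dx be x y) (inv2ib a b)).
Definition i_y (al be : R -> R -> R) (x y : R) : Afib :=
  let a := al x y in let b := be x y in
  sclA (-1) (mulA a b (dy al x y, dy be x y) (inv2ib a b)).

Definition dX (al be u v : R -> R -> R) (x y : R) : Afib :=
  addA (dx u x y, dx v x y) (sclA (v x y) (i_x al be x y)).
Definition dY (al be u v : R -> R -> R) (x y : R) : Afib :=
  addA (dy u x y, dy v x y) (sclA (v x y) (i_y al be x y)).
Definition dbar (al be u v : R -> R -> R) (x y : R) : Afib :=
  sclA (/ 2) (addA (dX al be u v x y)
                   (mulA (al x y) (be x y) Ai (dY al be u v x y))).

Definition rigid (Om : R -> R -> Prop) (al be : R -> R -> R) : Prop :=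
  forall x y, Om x y ->
    addA (i_x al be x y) (mulA (al x y) (be x y) Ai (i_y al be x y)) = (0, 0).

Definition Zc (xi eta x y : R) : Afib := (y - eta, - (x - xi)).

(* Main.v *)
Require Import Defs.
From Stdlib Require Import Reals.
From Coquelicot Require Import Coquelicot.
Open Scope R_scope.
From Stdlib Require Import Lra.
Definition NN a b s t := s*s + b*s*t + a*t*t.
Definition UU a b s t := (s + b*t) / NN a b s t.
Definition VV a b s t := t / NN a b s t.
Definition UX a b ax bx s t :=
  (bx*t + b)/NN a b s t - (s+b*t)*(bx*s*t + b*s + ax*t*t + 2*a*t)/(NN a b s t * NN a b s t).
Definition VX a b ax bx s t :=
  1/NN a b s t - t*(bx*s*t + b*s + ax*t*t + 2*a*t)/(NN a b s t * NN a b s t).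
Definition UY a b ay by_ s t :=
  (1 + by_*t)/NN a b s t - (s+b*t)*(2*s + by_*s*t + b*t + ay*t*t)/(NN a b s t * NN a b s t).
Definition VY a b ay by_ s t :=
  - (t*(2*s + by_*s*t + b*t + ay*t*t))/(NN a b s t * NN a b s t).

Lemma NN_pos a b s t : 4*a - b^2 > 0 -> (s,t) <> (0,0) -> NN a b s t > 0.
Proof.
  intros HD Hst. unfold NN.
  destruct (Req_dec t 0) as [->|Ht].
  - assert (s <> 0) by (intro; subst; apply Hst; reflexivity).
    pose proof (Rsqr_pos_lt s H). unfold Rsqr in *.
    replace (s * s + b * s * 0 + a * 0 * 0) with (s*s) by ring. lra.
  - pose proof (Rsqr_pos_lt t Ht). unfold Rsqr in *.
    assert (s*s + b*s*t + a*t*t = (s + b*t/2)^2 + (4*a - b^2)/4 * (t*t)) by field.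
    rewrite H0. assert (0 <= (s + b*t/2)^2) by (apply pow2_ge_0).
    assert (0 < (4*a - b^2)/4 * (t*t)) by (apply Rmult_lt_0_compat; lra). lra.
Qed.

Lemma alg (a b ax bx ay by_ s t : R) :
 4*a - b^2 > 0 -> (s,t) <> (0,0) ->
 addA (sclA (-1) (mulA a b (ax,bx) (inv2ib a b)))
      (mulA a b Ai (sclA (-1) (mulA a b (ay,by_) (inv2ib a b)))) = (0,0) ->
 sclA (/2) (addA (addA (UX a b ax bx s t, VX a b ax bx s t)
                      (sclA (VV a b s t) (sclA (-1) (mulA a b (ax,bx) (inv2ib a b)))))
    (mulA a b Ai (addA (UY a b ay by_ s t, VY a b ay by_ s t)
                      (sclA (VV a b s t) (sclA (-1) (mulA a b (ay,by_) (inv2ib a b))))))) = (0,0).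
Proof.
  intros HD Hst Hr.
  pose proof (NN_pos a b s t HD Hst) as HN.
  assert (Ha : a > 0) by nra.
  unfold addA, sclA, mulA, inv2ib, Ai in Hr |- *; simpl in Hr |- *.
  injection Hr as R1 R2.
  set (D := 4*a - b^2) in *.
  assert (HD' : D <> 0) by lra.
  assert (HDb : 4*a - b*b <> 0) by (unfold D in HD; nra).
  set (P := (b*ay - 2*a*by_)/D).
  set (Q := (2*ay - b*by_)/D).
  assert (Eay : ay = -b*P + 2*a*Q) by (unfold P, Q, D in *; field; auto).
  assert (Eby : by_ = b*Q - 2*P) by (unfold P, Q, D in *; field; auto).
  assert (R1' : (b*ax - 2*a*bx)/D - a*Q = 0).
  { rewrite <- R1. unfold P, Q, D. field; auto. }
  assert (R2' : (2*ax - b*bx)/D + P - b*Q = 0).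
  { rewrite <- R2. unfold P, Q, D. field; auto. }
  assert (EQ : Q = ((b*ax - 2*a*bx)/D)/a).
  { assert (a*Q = (b*ax - 2*a*bx)/D) by lra. rewrite <- H. field; repeat split; auto; lra. }
  assert (EP : P = b*Q - (2*ax - b*bx)/D) by lra.
  clearbody P Q. subst ay by_. rewrite EP. rewrite EQ.
  clear R1 R2 R1' R2' EP EQ.
  unfold D in *. unfold UX, VX, UY, VY, VV in *.
  assert (HN' : NN a b s t <> 0) by lra.
  clear D. unfold NN in *. f_equal; field; repeat split; auto; lra.
Qed.
Lemma derUx (al be : R -> R -> R) xi eta x y :
  ex_derive (fun t => al t y) x -> ex_derive (fun t => be t y) x ->
  NN (al x y) (be x y) (y-eta) (x-xi) <> 0 ->
  is_derive (fun t => UU (al t y) (be t y) (y-eta) (t-xi)) x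
    (UX (al x y) (be x y) (dx al x y) (dx be x y) (y-eta) (x-xi)).
Proof.
  intros Ha Hb HN. unfold UU, UX, dx. unfold NN in *.
  auto_derive.
  - repeat split; auto.
  - field. replace (x + - xi) with (x - xi) by ring. auto.
Qed.
Lemma derVx (al be : R -> R -> R) xi eta x y :
  ex_derive (fun t => al t y) x -> ex_derive (fun t => be t y) x ->
  NN (al x y) (be x y) (y-eta) (x-xi) <> 0 ->
  is_derive (fun t => VV (al t y) (be t y) (y-eta) (t-xi)) x
    (VX (al x y) (be x y) (dx al x y) (dx be x y) (y-eta) (x-xi)).
Proof.
  intros Ha Hb HN. unfold VV, VX, dx. unfold NN in *.
  auto_derive.
  - repeat split; auto.
  - field. replace (x + - xi) with (x - xi) by ring. auto.
Qed.
Lemma derUy (al be : R -> R -> R) xi eta x y :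
  ex_derive (fun t => al x t) y -> ex_derive (fun t => be x t) y ->
  NN (al x y) (be x y) (y-eta) (x-xi) <> 0 ->
  is_derive (fun t => UU (al x t) (be x t) (t-eta) (x-xi)) y
    (UY (al x y) (be x y) (dy al x y) (dy be x y) (y-eta) (x-xi)).
Proof.
  intros Ha Hb HN. unfold UU, UY, dy. unfold NN in *.
  auto_derive.
  - repeat split; auto.
  - field. replace (y + - eta) with (y - eta) by ring. auto.
Qed.
Lemma derVy (al be : R -> R -> R) xi eta x y :
  ex_derive (fun t => al x t) y -> ex_derive (fun t => be x t) y ->
  NN (al x y) (be x y) (y-eta) (x-xi) <> 0 ->
  is_derive (fun t => VV (al x t) (be x t) (t-eta) (x-xi)) y
    (VY (al x y) (be x y) (dy al x y) (dy be x y) (y-eta) (x-xi)).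
Proof.
  intros Ha Hb HN. unfold VV, VY, dy. unfold NN in *.
  auto_derive.
  - repeat split; auto.
  - field. replace (y + - eta) with (y - eta) by ring. auto.
Qed.
Lemma C1_of (S : R -> R -> Prop) (f Fx Fy : R -> R -> R) :
  (forall x y, S x y -> locally_2d S x y) ->
  (forall x y, S x y -> is_derive (fun t => f t y) x (Fx x y)) ->
  (forall x y, S x y -> is_derive (fun t => f x t) y (Fy x y)) ->
  (forall x y, S x y -> continuity_2d_pt f x y /\ continuity_2d_pt Fx x y /\ continuity_2d_pt Fy x y) ->
  C1_on S f.
Proof.
  intros HS Hx Hy Hc x y Sxy.
  destruct (Hc x y Sxy) as (c1 & c2 & c3).
  split; [exact c1|]. split; [eexists; apply Hx; auto|].
  split; [eexists; apply Hy; auto|]. split.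
  - apply continuity_2d_pt_ext_loc with Fx; auto.
    destruct (HS x y Sxy) as [d Hd]. exists d. intros u v Hu Hv.
    symmetry. unfold dx. apply is_derive_unique. apply Hx. auto.
  - apply continuity_2d_pt_ext_loc with Fy; auto.
    destruct (HS x y Sxy) as [d Hd]. exists d. intros u v Hu Hv.
    symmetry. unfold dy. apply is_derive_unique. apply Hy. auto.
Qed.

Lemma open_punct (Om : R -> R -> Prop) xi eta :
  open2 Om -> forall x y, Om x y /\ (x,y) <> (xi,eta) ->
  locally_2d (fun x y => Om x y /\ (x,y) <> (xi,eta)) x y.
Proof.
  intros HO x y [Hxy Hne].
  destruct (HO x y Hxy) as [e [He HE]].
  destruct (Req_dec x xi) as [Ex|Ex].
  - assert (Ey : y <> eta) by (intro; subst; auto).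
    assert (0 < Rmin e (Rabs (y - eta))).
    { apply Rmin_glb_lt; auto. apply Rabs_pos_lt. lra. }
    exists (mkposreal _ H). simpl. intros u v Hu Hv.
    pose proof (Rmin_l e (Rabs (y-eta))). pose proof (Rmin_r e (Rabs (y-eta))).
    split. apply HE; lra.
    intro Heq. injection Heq as -> ->.
    rewrite Rabs_minus_sym in Hv. lra.
  - assert (0 < Rmin e (Rabs (x - xi))).
    { apply Rmin_glb_lt; auto. apply Rabs_pos_lt. lra. }
    exists (mkposreal _ H). simpl. intros u v Hu Hv.
    pose proof (Rmin_l e (Rabs (x-xi))). pose proof (Rmin_r e (Rabs (x-xi))).
    split. apply HE; lra.
    intro Heq. injection Heq as -> ->.
    rewrite Rabs_minus_sym in Hu. lra.
Qed.

Ltac cont := unfold Rdiv; repeat first [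
  apply continuity_2d_pt_plus | apply continuity_2d_pt_minus
  | apply continuity_2d_pt_mult | apply continuity_2d_pt_opp
  | apply continuity_2d_pt_inv | apply continuity_2d_pt_id1
  | apply continuity_2d_pt_id2 | apply continuity_2d_pt_const | assumption ].

Lemma cont_test (al be a1 b1 : R -> R -> R) xi eta x y :
  continuity_2d_pt al x y -> continuity_2d_pt be x y ->
  continuity_2d_pt a1 x y -> continuity_2d_pt b1 x y ->
  NN (al x y) (be x y) (y-eta) (x-xi) <> 0 ->
  continuity_2d_pt (fun x y => UX (al x y) (be x y) (a1 x y) (b1 x y) (y-eta) (x-xi)) x y.
Proof.
  intros. unfold UX. cont. all: try (apply Rmult_integral_contrapositive; split); auto.
Qed.

Theorem lemma5p5 (Om : R -> R -> Prop) (al be : R -> R -> R) (xi eta : R) :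
  open2 Om ->
  C1_on Om al -> C1_on Om be ->
  (forall x y, Om x y -> 4 * al x y - be x y ^ 2 > 0) ->
  rigid Om al be ->
  Om xi eta ->
  exists u v : R -> R -> R,
    (forall x y, Om x y -> (x, y) <> (xi, eta) ->
       mulA (al x y) (be x y) (u x y, v x y) (Zc xi eta x y) = oneA) /\
    C1_on (fun x y => Om x y /\ (x, y) <> (xi, eta)) u /\
    C1_on (fun x y => Om x y /\ (x, y) <> (xi, eta)) v /\
    (forall x y, Om x y -> (x, y) <> (xi, eta) -> dbar al be u v x y = (0, 0)).
Proof.
  intros HO Ha Hb HD Hr Hz.
  assert (HN : forall x y, Om x y -> (x, y) <> (xi, eta) ->
            NN (al x y) (be x y) (y-eta) (x-xi) <> 0).
  { intros x y Hxy Hne. apply Rgt_not_eq. apply NN_pos; auto.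
    intro E. injection E as E1 E2. apply Hne. f_equal; lra. }
  exists (fun x y => UU (al x y) (be x y) (y-eta) (x-xi)),
         (fun x y => VV (al x y) (be x y) (y-eta) (x-xi)).
  split; [|split; [|split]].
  - intros x y Hxy Hne. pose proof (HN x y Hxy Hne) as H.
    unfold mulA, Zc, oneA, UU, VV in *; simpl. unfold NN in *.
    f_equal; field; auto.
  - apply C1_of with
      (Fx := fun x y => UX (al x y) (be x y) (dx al x y) (dx be x y) (y-eta) (x-xi))
      (Fy := fun x y => UY (al x y) (be x y) (dy al x y) (dy be x y) (y-eta) (x-xi)).
    + apply open_punct; auto.
    + intros x y [Hxy Hne]. destruct (Ha x y Hxy) as (_&?&?&_&_).
      destruct (Hb x y Hxy) as (_&?&?&_&_). apply derUx; auto.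
    + intros x y [Hxy Hne]. destruct (Ha x y Hxy) as (_&?&?&_&_).
      destruct (Hb x y Hxy) as (_&?&?&_&_). apply derUy; auto.
    + intros x y [Hxy Hne]. pose proof (HN x y Hxy Hne).
      destruct (Ha x y Hxy) as (?&?&?&?&?).
      destruct (Hb x y Hxy) as (?&?&?&?&?).
      unfold UU, UX, UY; split; [|split]; cont;
        try (apply Rmult_integral_contrapositive; split); auto.
  - apply C1_of with
      (Fx := fun x y => VX (al x y) (be x y) (dx al x y) (dx be x y) (y-eta) (x-xi))
      (Fy := fun x y => VY (al x y) (be x y) (dy al x y) (dy be x y) (y-eta) (x-xi)).
    + apply open_punct; auto.
    + intros x y [Hxy Hne]. destruct (Ha x y Hxy) as (_&?&?&_&_).
      destruct (Hb x y Hxy) as (_&?&?&_&_). apply derVx; auto.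
    + intros x y [Hxy Hne]. destruct (Ha x y Hxy) as (_&?&?&_&_).
      destruct (Hb x y Hxy) as (_&?&?&_&_). apply derVy; auto.
    + intros x y [Hxy Hne]. pose proof (HN x y Hxy Hne).
      destruct (Ha x y Hxy) as (?&?&?&?&?).
      destruct (Hb x y Hxy) as (?&?&?&?&?).
      unfold VV, VX, VY; split; [|split]; cont;
        try (apply Rmult_integral_contrapositive; split); auto.
  - intros x y Hxy Hne. pose proof (HN x y Hxy Hne).
    destruct (Ha x y Hxy) as (?&?&?&?&?).
    destruct (Hb x y Hxy) as (?&?&?&?&?).
    assert (E1 : dx (fun x y => UU (al x y) (be x y) (y-eta) (x-xi)) x y
       = UX (al x y) (be x y) (dx al x y) (dx be x y) (y-eta) (x-xi))
      by (unfold dx at 1; apply is_derive_unique; apply derUx; auto).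
    assert (E2 : dx (fun x y => VV (al x y) (be x y) (y-eta) (x-xi)) x y
       = VX (al x y) (be x y) (dx al x y) (dx be x y) (y-eta) (x-xi))
      by (unfold dx at 1; apply is_derive_unique; apply derVx; auto).
    assert (E3 : dy (fun x y => UU (al x y) (be x y) (y-eta) (x-xi)) x y
       = UY (al x y) (be x y) (dy al x y) (dy be x y) (y-eta) (x-xi))
      by (unfold dy at 1; apply is_derive_unique; apply derUy; auto).
    assert (E4 : dy (fun x y => VV (al x y) (be x y) (y-eta) (x-xi)) x y
       = VY (al x y) (be x y) (dy al x y) (dy be x y) (y-eta) (x-xi))
      by (unfold dy at 1; apply is_derive_unique; apply derVy; auto).
    unfold dbar, dX, dY. rewrite E1, E2, E3, E4.
    apply alg.
    + apply HD; auto.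
    + intro E. injection E as F1 F2. apply Hne. f_equal; lra.
    + exact (Hr x y Hxy).
Qed.
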